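(* Let $T$ be a decomposition tree of a distance-hereditary graph $G$, and let $v$ be an internal node of $T$ labeled $\oplus$ with left child $v_l$ and right child $v_r$, such that property (P) holds at $v_l$ and at $v_r$. Assume that $\hat\alpha(v_r)\le\hat\beta(v_l)$, and that neither ($\hat\alpha(v_l)=\hat\beta(v_r)=0$) nor ($\hat\alpha(v_r)=\hat\beta(v_l)=0$) holds. Then $\hat\beta(v)=\hat\beta(v_l)-\hat\alpha(v_r)$.
   Context: All graphs are finite, simple, undirected. For a graph $H$ and $S\subseteq V(H)$, $N_H[S]$ is $S$ together with all vertices adjacent to a vertex of $S$, and $H[S]$ is the induced subgraph. Graphs carry a ''twin set'': a single-vertex graph on $x$ has twin set $\{x\}$. For vertex-disjoint graphs $G_l,G_r$ with twin sets $TS(G_l),TS(G_r)$: the true twin operation $G_l\otimes G_r$ has vertex set $V(G_l)\cup V(G_r)$, edge set $E(G_l)\cup E(G_r)\cup\{uw: u\in TS(G_l), w\in TS(G_r)\}$ and twin set $TS(G_l)\cup TS(G_r)$; the false twin operation $G_l\odot G_r$ has vertex set $V(G_l)\cup V(G_r)$, edge set $E(G_l)\cup E(G_r)$, twin set $TS(G_l)\cup TS(G_r)$; the attachment operation $G_l\oplus G_r$ has the same vertex and edge sets as $G_l\otimes G_r$ and twin set $TS(G_l)$. A decomposition tree $T$ of $G$ is a rooted binary tree whose leaves are in bijection with $V(G)$, each internal node having a left and a right child and a label in $\{\otimes,\odot,\oplus\}$; for each node $v$ define $\hat G(v)$ and $\hat{TS}(v)$ recursively: for a leaf $x$, the single-vertex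 graph on $x$ with twin set $\{x\}$; for an internal node $v$ with label $\circ$ and children $v_l,v_r$, $\hat G(v)=\hat G(v_l)\circ\hat G(v_r)$ with the corresponding twin set; one requires $\hat G(\text{root})=G$. Then $\hat G(v)$ is the subgraph of $G$ induced by the set $\hat V(v)$ of leaves below $v$. For a node $u$ and $0\le k\le|\hat{TS}(u)|$, call $S\subseteq\hat V(u)$ $k$-feasible if $\hat V(u)\setminus\hat{TS}(u)\subseteq N_{\hat G(u)}[S]$ and there is $X\subseteq S\cap\hat{TS}(u)$ with $|X|=k$ such that $\hat G(u)[S\setminus X]$ has a perfect matching. $\hat\gamma_k(u)$ is the minimum size of a $k$-feasible set. $\hat{min}(u)=\min\{\hat\gamma_k(u):0\le k\le|\hat{TS}(u)|\}$, and $\hat\alpha(u)$, $\hat\beta(u)$ are the smallest and the largest $k$ with $\hat\gamma_k(u)=\hat{min}(u)$. Property (P) holds at $u$ if for every $0\le k\le|\hat{TS}(u)|$: $\hat\gamma_k(u)=\hat{min}(u)+\hat\alpha(u)-k$ when $k\le\hat\alpha(u)$; $\hat\gamma_k(u)=\hat{min}(u)+k-\hat\beta(u)$ when $k\ge\hat\beta(u)$; $\hat\gamma_k(u)=\hat{min}(u)$ when $\hat\alpha(u)<k<\hat\beta(u)$ and $k-\hat\alpha(u)$ is even; and $\hat\gamma_k(u)=\hat{min}(u)+1$ otherwise. *)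

(* Defs.v *)
From mathcomp Require Import all_boot.
Set Implicit Arguments. Unset Strict Implicit. Unset Printing Implicit Defensive.

(* A graph G is a finite vertex type V with an adjacency relation e : rel V,
   assumed symmetric and irreflexive (simple undirected graph). *)

Definition walk_in (V : finType) (e : rel V) (S : {set V}) (x y : V) (k : nat) : Prop :=
  exists p : seq V, [/\ path e x p, last x p = y, all (fun z => z \in S) (x :: p)
                      & size p <= k].

(* distance-hereditary: every connected induced subgraph G[S] is isometric,
   i.e. d_{G[S]}(x,y) <= d_G(x,y) (the converse inequality is automatic). *)
Definition dist_hereditary (V : finType) (e : rel V) : Prop :=
  forall S : {set V},
    (forall x y, x \in S -> y \in S -> exists k, walk_in e S x y k) ->
    forall x y k, x \in S -> y \in S -> walk_in e [set: V] x y k -> walk_in e S x y k.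

Inductive dop := OTrue (* true twin, ⊗ *) | OFalse (* false twin, ⊙ *) | OAttach (* ⊕ *).

Inductive dtree (V : Type) := Leaf of V | Node of dop & dtree V & dtree V.
Arguments Leaf {V}. Arguments Node {V}.

Section Hat.
Variable V : finType.

Fixpoint leaves (t : dtree V) : seq V :=
  match t with Leaf x => [:: x] | Node _ l r => leaves l ++ leaves r end.

Fixpoint hatV (t : dtree V) : {set V} :=
  match t with Leaf x => [set x] | Node _ l r => hatV l :|: hatV r end.

Fixpoint hatTS (t : dtree V) : {set V} :=
  match t with
  | Leaf x => [set x]
  | Node OAttach l _ => hatTS l
  | Node _ l r => hatTS l :|: hatTS r
  end.

Fixpoint hatE (t : dtree V) : rel V :=
  match t with
  | Leaf _ => fun _ _ => false
  | Node OFalse l r => fun u w => hatE l u w || hatE r u w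
  | Node _ l r => fun u w =>
      [|| hatE l u w, hatE r u w,
          (u \in hatTS l) && (w \in hatTS r) | (u \in hatTS r) && (w \in hatTS l)]
  end.

Fixpoint is_subtree (s t : dtree V) : Prop :=
  s = t \/ match t with Leaf _ => False | Node _ l r => is_subtree s l \/ is_subtree s r end.

Definition decomp_tree (e : rel V) (T : dtree V) : Prop :=
  [/\ uniq (leaves T), (forall x, x \in leaves T) & (forall u w, hatE T u w = e u w)].

Definition cnbhd (u : dtree V) (S : {set V}) : {set V} :=
  S :|: [set w in hatV u | [exists s in S, hatE u s w]].

Definition has_pm (u : dtree V) (W : {set V}) : Prop :=
  exists M : {set {set V}},
    (forall m, m \in M -> exists x y, [/\ x != y, m = [set x; y], x \in W, y \in W & hatE u x y])
    /\ (forall x, x \in W -> #|[set m in M | x \in m]| = 1).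

Definition kfeasible (u : dtree V) (k : nat) (S : {set V}) : Prop :=
  [/\ S \subset hatV u, hatV u :\: hatTS u \subset cnbhd u S &
      exists X : {set V}, [/\ X \subset S :&: hatTS u, #|X| = k & has_pm u (S :\: X)]].

Definition gamma_is (u : dtree V) (k m : nat) : Prop :=
  (exists S, kfeasible u k S /\ #|S| = m) /\ (forall S, kfeasible u k S -> m <= #|S|).

Definition min_is (u : dtree V) (m : nat) : Prop :=
  (exists k, k <= #|hatTS u| /\ gamma_is u k m) /\
  (forall k m', k <= #|hatTS u| -> gamma_is u k m' -> m <= m').

Definition alpha_is (u : dtree V) (a : nat) : Prop :=
  a <= #|hatTS u| /\ (exists m, min_is u m /\ gamma_is u a m) /\
  (forall k m, k <= #|hatTS u| -> min_is u m -> gamma_is u k m -> a <= k).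

Definition beta_is (u : dtree V) (b : nat) : Prop :=
  b <= #|hatTS u| /\ (exists m, min_is u m /\ gamma_is u b m) /\
  (forall k m, k <= #|hatTS u| -> min_is u m -> gamma_is u k m -> k <= b).

Definition propP (u : dtree V) : Prop :=
  exists mn a b, [/\ min_is u mn, alpha_is u a, beta_is u b &
    forall k, k <= #|hatTS u| ->
      gamma_is u k (if k <= a then mn + a - k
                    else if b <= k then mn + k - b
                    else if ~~ odd (k - a) then mn
                    else mn.+1)].
End Hat.

(* Main.v *)
Require Import Defs.
From mathcomp Require Import all_boot zify.
From Stdlib Require Import Classical.
Set Implicit Arguments. Unset Strict Implicit. Unset Printing Implicit Defensive.

Section Basic.
Variable V : finType.
Implicit Types (t u c : dtree V).

Lemma hatTS_sub t : hatTS t \subset hatV t.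
Proof.
elim: t => [x|o l IHl r IHr] /=; first by [].
case: o => //=; first exact: setUSS.
- exact: setUSS.
- exact: (subset_trans IHl (subsetUl _ _)).
Qed.

Lemma hatE_V t x y : hatE t x y -> (x \in hatV t) && (y \in hatV t).
Proof.
elim: t => [z|o l IHl r IHr] //=.
have hl := hatTS_sub l; have hr := hatTS_sub r.
rewrite !inE.
case: o => /=.
- case/or4P => [/IHl/andP[-> ->]|/IHr/andP[-> ->]|/andP[a b]|/andP[a b]];
    by rewrite ?orbT // ?(subsetP hl _ a) ?(subsetP hr _ b) ?(subsetP hl _ b) ?(subsetP hr _ a) ?orbT.
- case/orP => [/IHl/andP[-> ->]|/IHr/andP[-> ->]]; by rewrite ?orbT.
- case/or4P => [/IHl/andP[-> ->]|/IHr/andP[-> ->]|/andP[a b]|/andP[a b]];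
    by rewrite ?orbT // ?(subsetP hl _ a) ?(subsetP hr _ b) ?(subsetP hl _ b) ?(subsetP hr _ a) ?orbT.
Qed.

Lemma hatE_sym t x y : hatE t x y = hatE t y x.
Proof.
elim: t x y => [z|o l IHl r IHr] x y //=.
case: o => /=; rewrite IHl IHr //;
by case: (x \in hatTS l); case: (y \in hatTS l); case: (x \in hatTS r); case: (y \in hatTS r);
  rewrite /= ?orbT ?orbF.
Qed.

Lemma hatV_node o (l r : dtree V) : hatV (Node o l r) = hatV l :|: hatV r.
Proof. by []. Qed.

Lemma hatV_leaves t : hatV t = [set x | x \in leaves t].
Proof.
elim: t => [z|o l IHl r IHr]; apply/setP => x; first by rewrite !inE.
by rewrite hatV_node inE IHl IHr !inE mem_cat.
Qed.

Lemma subtree_uniq s t : is_subtree s t -> uniq (leaves t) -> uniq (leaves s).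
Proof.
elim: t => [z|o l IHl r IHr] /=; first by case => // ->.
case => [-> //|[h|h]]; rewrite cat_uniq => /and3P[u1 _ u3]; [exact: IHl|exact: IHr].
Qed.

Lemma card1_uniq (M : {set {set V}}) y m1 m2 :
  #|[set m in M | y \in m]| = 1 -> m1 \in M -> y \in m1 -> m2 \in M -> y \in m2 -> m1 = m2.
Proof.
move/eqP/cards1P => [z hz] h1 h1' h2 h2'.
have: m1 \in [set m in M | y \in m] by rewrite inE h1 h1'.
have: m2 \in [set m in M | y \in m] by rewrite inE h2 h2'.
by rewrite hz !inE => /eqP -> /eqP ->.
Qed.

Lemma cnbhd_in u S x : (x \in cnbhd u S) = (x \in S) || (x \in hatV u) && [exists s in S, hatE u s x].
Proof. by rewrite /cnbhd !inE. Qed.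

Lemma gamma_ex u k S : kfeasible u k S -> exists m, m <= #|S| /\ gamma_is u k m.
Proof.
move: {2}#|S| (leqnn #|S|) => n; elim: n S => [|n IH] S hS hF.
  exists #|S|; split => //; split; first by exists S.
  by move=> S' _; move: hS; rewrite leqn0 => /eqP ->.
case: (classic (exists S', kfeasible u k S' /\ #|S'| < #|S|)) => [[S' [hF' hlt]]|hno].
  have [m [hm hg]] := IH S' (leq_trans (ltnSE (leq_trans hlt hS)) (leqnn _)) hF'.
  by exists m; split => //; apply: leq_trans hm (ltnW hlt).
exists #|S|; split => //; split; first by exists S.
move=> S' hF'; rewrite leqNgt; apply/negP => hlt; apply: hno; by exists S'.
Qed.

Lemma feas_k u k S : kfeasible u k S -> k <= #|hatTS u|.
Proof.
case=> _ _ [X [hX <- _]]; apply: subset_leq_card; exact: (subset_trans hX (subsetIr _ _)).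
Qed.

Lemma min_le u mn k S : min_is u mn -> kfeasible u k S -> mn <= #|S|.
Proof.
move=> [_ hmin] hF; have [m [hm hg]] := gamma_ex hF.
exact: leq_trans (hmin _ _ (feas_k hF) hg) hm.
Qed.

Lemma gamma_of_min u mn k S : min_is u mn -> kfeasible u k S -> #|S| = mn -> gamma_is u k mn.
Proof.
move=> hm hF hS; split; first by exists S.
move=> S' hF'; exact: min_le hm hF'.
Qed.

Lemma min_uniq u m1 m2 : min_is u m1 -> min_is u m2 -> m1 = m2.
Proof.
move=> [[k1 [hk1 hg1]] h1] [[k2 [hk2 hg2]] h2]; apply/eqP; rewrite eqn_leq.
by rewrite (h1 _ _ hk2 hg2) (h2 _ _ hk1 hg1).
Qed.

Lemma pm_lift u u' W : (forall x y, hatE u x y -> hatE u' x y) -> has_pm u W -> has_pm u' W.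
Proof.
move=> hE [M [h1 h2]]; exists M; split => // m /h1 [x [y [? ? ? ? ?]]].
by exists x, y; split => //; apply: hE.
Qed.

Lemma pm_sub u (W : {set V}) (M : {set {set V}}) m : (forall m, m \in M -> exists x y, [/\ x != y, m = [set x; y], x \in W, y \in W & hatE u x y]) ->
  m \in M -> m \subset W.
Proof. by move=> h /h [x [y [_ -> hx hy _]]]; rewrite subUset !sub1set hx hy. Qed.

Lemma pm_union u W1 W2 : has_pm u W1 -> has_pm u W2 ->
  (forall x, x \in W1 -> x \in W2 -> False) -> has_pm u (W1 :|: W2).
Proof.
move=> [M1 [a1 b1]] [M2 [a2 b2]] hd; exists (M1 :|: M2); split.
  move=> m; rewrite inE => /orP[/a1|/a2] [x [y [? ? hx hy ?]]]; exists x, y; split => //;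
  by rewrite inE ?hx ?hy ?orbT.
move=> x; rewrite inE => /orP[hx|hx].
  suff -> : [set m in M1 :|: M2 | x \in m] = [set m in M1 | x \in m] by apply: b1.
  apply/setP => m; rewrite !inE.
  case hm2: (m \in M2) => /=; last by rewrite orbF.
  rewrite orbT; case hxm: (x \in m); rewrite ?andbF ?andbT //.
  by exfalso; apply: (hd x hx); apply: (subsetP (pm_sub a2 hm2)).
suff -> : [set m in M1 :|: M2 | x \in m] = [set m in M2 | x \in m] by apply: b2.
apply/setP => m; rewrite !inE.
case hm1: (m \in M1) => /=; last by [].
case hxm: (x \in m); rewrite ?andbF ?andbT //.
by exfalso; apply: (hd x) hx; apply: (subsetP (pm_sub a1 hm1)).
Qed.
End Basic.

Section Restrict.
Variable V : finType.
Definition crossC (M : {set {set V}}) (U U' : {set V}) :=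
  [set m in M | ~~ (m \subset U) && ~~ (m \subset U')].
Definition Ypart (W : {set V}) M U U' := [set x in W :&: U | [exists m in crossC M U U', x \in m]].

Variables (u : dtree V) (W : {set V}) (M : {set {set V}}).
Hypothesis hM1 : forall m, m \in M -> exists x y, [/\ x != y, m = [set x; y], x \in W, y \in W & hatE u x y].
Hypothesis hM2 : forall x, x \in W -> #|[set m in M | x \in m]| = 1.

Lemma other m x : m \in M -> x \in m -> exists y, [/\ m = [set x; y], y \in W, x != y & hatE u x y].
Proof.
move=> /hM1 [a [b [hab -> ha hb he]]]; rewrite !inE => /orP[/eqP->|/eqP->].
  by exists b.
by exists a; split => //; [rewrite setUC | rewrite eq_sym | rewrite hatE_sym].
Qed.

Lemma crossC_sym U U' : crossC M U U' = crossC M U' U.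
Proof. by apply/setP => m; rewrite !inE [~~ _ && _]andbC. Qed.

Section Side.
Variables (c : dtree V) (U U' TU : {set V}).
Hypothesis hUU' : forall x, x \in U -> x \in U' -> False.
Hypothesis hWU : W \subset U :|: U'.
Hypothesis hedge : forall x y, hatE u x y -> x \in U -> y \in U -> hatE c x y.
Hypothesis hcross : forall x y, hatE u x y -> x \in U -> y \in U' -> x \in TU.

Local Notation Y := (Ypart W M U U').

Lemma Y_sub : Y \subset W :&: U.
Proof. by apply/subsetP => x; rewrite inE => /andP[]. Qed.

Lemma Y_partner x : x \in Y -> exists y, [/\ y \in Ypart W M U' U, y \in U', hatE u x y & [set x; y] \in M].
Proof.
rewrite inE => /andP[hxWU /existsP [m /andP[hmC hxm]]].
move: (hmC); rewrite inE => /and3P[hm hnU hnU'].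
have [y [hmxy hyW hxy he]] := other hm hxm.
have hxU : x \in U by move: hxWU; rewrite inE => /andP[].
have hyU : y \notin U.
  apply/negP => hyU; move: hnU; rewrite hmxy subUset !sub1set hxU hyU //.
have hyU' : y \in U'.
  by move: (subsetP hWU y hyW); rewrite inE (negbTE hyU).
exists y; split => //; last by rewrite -hmxy.
rewrite inE inE hyW hyU' /=; apply/existsP; exists m; rewrite -crossC_sym hmC /=.
by rewrite hmxy !inE eqxx orbT.
Qed.

Lemma Y_TU : Y \subset TU.
Proof.
apply/subsetP => x hx; have [y [_ hy he _]] := Y_partner hx.
apply: hcross he _ hy; by move: (subsetP Y_sub x hx); rewrite inE => /andP[].
Qed.

Lemma Y_pm : has_pm c ((W :&: U) :\: Y).
Proof.
exists [set m in M | m \subset U]; split.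
  move=> m; rewrite inE => /andP[hm hmU].
  have [x [y [hxy hmxy hx hy he]]] := hM1 hm.
  have hxU : x \in U by apply: (subsetP hmU); rewrite hmxy !inE eqxx.
  have hyU : y \in U by apply: (subsetP hmU); rewrite hmxy !inE eqxx orbT.
  have notY : forall z, z \in W -> z \in m -> z \notin Y.
    move=> z hz hzm; apply/negP; rewrite inE => /andP[_ /existsP[m' /andP[hm'C hzm']]].
    move: hm'C; rewrite inE => /and3P[hm' hnU _].
    by rewrite -(card1_uniq (hM2 hz) hm hzm hm' hzm') hmU in hnU.
  exists x, y; split => //; last by apply: hedge.
    by rewrite in_setD notY ?hmxy ?inE ?eqxx //= hx hxU.
  by rewrite in_setD notY ?hmxy ?inE ?eqxx ?orbT //= hy hyU.
move=> x; rewrite !inE => /andP[hxY /andP[hxW hxU]].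
suff -> : [set m in [set m in M | m \subset U] | x \in m] = [set m in M | x \in m] by apply: hM2.
apply/setP => m; rewrite !inE; case hm: (m \in M) => //=; case hxm: (x \in m); rewrite ?andbF //.
rewrite andbT; apply/negPn/negP => hnU.
move/negP: hxY; apply; rewrite hxW hxU /=; apply/existsP; exists m; rewrite hxm andbT.
rewrite inE hm hnU /=; apply/negP => hmU'.
by apply: (hUU' hxU); apply: (subsetP hmU').
Qed.

Lemma Y_card : #|Y| <= #|Ypart W M U' U|.
Proof.
pose h x := odflt x [pick y in Ypart W M U' U | [set x; y] \in M].
have hP : forall x, x \in Y -> (h x \in Ypart W M U' U) && ([set x; h x] \in M).
  move=> x hx; rewrite /h; case: pickP => [y /andP[-> ->] //|none].
  have [y [hy _ _ hm]] := Y_partner hx.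
  by move: (none y); rewrite hy hm.
rewrite -(card_in_imset (f := h) (D := mem Y)).
  apply: subset_leq_card; apply/subsetP => y /imsetP [x hx ->]; by case/andP: (hP x hx).
move=> x x' hx hx' hh.
case/andP: (hP x hx) => hy hm; case/andP: (hP x' hx') => _; rewrite -hh => hm'.
have hyW : h x \in W by move: hy; rewrite !inE => /andP[/andP[]].
have := card1_uniq (hM2 hyW) hm _ hm' _; rewrite !inE !eqxx !orbT => /(_ isT isT) heq.
have : x \in [set x'; h x] by rewrite -heq !inE eqxx.
rewrite !inE => /orP[/eqP //|/eqP hxe].
exfalso; apply: (hUU' (x := x)).
  by move: (subsetP Y_sub x hx); rewrite inE => /andP[].
by move: hy; rewrite -hxe !inE => /andP[/andP[]].
Qed.
End Side.
End Restrict.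

Section Att.
Variable V : finType.
Variables vl vr : dtree V.
Hypothesis Hdis : forall x, x \in hatV vl -> x \in hatV vr -> False.
Local Notation v := (Node OAttach vl vr).
Local Notation A := (hatTS vl).
Local Notation B := (hatTS vr).
Local Notation Vl := (hatV vl).
Local Notation Vr := (hatV vr).

Lemma hatE_att x y : hatE v x y =
  [|| hatE vl x y, hatE vr x y, (x \in A) && (y \in B) | (x \in B) && (y \in A)].
Proof. by []. Qed.
Lemma hatTS_att : hatTS v = A. Proof. by []. Qed.

Lemma inA x : x \in A -> x \in Vl. Proof. exact: (subsetP (hatTS_sub vl)). Qed.
Lemma inB x : x \in B -> x \in Vr. Proof. exact: (subsetP (hatTS_sub vr)). Qed.
Lemma inEl x y : hatE vl x y -> (x \in Vl) /\ (y \in Vl). Proof. by move/hatE_V/andP. Qed.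
Lemma inEr x y : hatE vr x y -> (x \in Vr) /\ (y \in Vr). Proof. by move/hatE_V/andP. Qed.

Lemma edge_l x y : hatE v x y -> x \in Vl -> y \in Vl -> hatE vl x y.
Proof.
move=> + hx hy; rewrite hatE_att => /or4P[//|/inEr[h _]|/andP[_ /inB h]|/andP[/inB h _]];
exfalso; by [apply: (Hdis hx h) | apply: (Hdis hy h) | apply: (Hdis hx h)].
Qed.

Lemma edge_r x y : hatE v x y -> x \in Vr -> y \in Vr -> hatE vr x y.
Proof.
move=> + hx hy; rewrite hatE_att => /or4P[/inEl[h _]|//|/andP[/inA h _]|/andP[_ /inA h]];
exfalso; by [apply: (Hdis h hx) | apply: (Hdis h hx) | apply: (Hdis h hy)].
Qed.

Lemma cross_l x y : hatE v x y -> x \in Vl -> y \in Vr -> x \in A.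
Proof.
move=> + hx hy; rewrite hatE_att => /or4P[/inEl[_ h]|/inEr[h _]|/andP[//]|/andP[/inB h _]];
exfalso; by [apply: (Hdis h hy) | apply: (Hdis hx h) | apply: (Hdis hx h)].
Qed.

Lemma cross_r x y : hatE v x y -> x \in Vr -> y \in Vl -> x \in B.
Proof.
move=> + hx hy; rewrite hatE_att => /or4P[/inEl[h _]|/inEr[_ h]|/andP[/inA h _]|/andP[//]];
exfalso; by [apply: (Hdis h hx) | apply: (Hdis hy h) | apply: (Hdis h hx)].
Qed.

Lemma AB x : x \in A -> x \in B -> False.
Proof. by move=> /inA h1 /inB h2; apply: (Hdis h1 h2). Qed.

Lemma pm_pair p q : p \in A -> q \in B -> has_pm v [set p; q].
Proof.
move=> hp hq; exists [set [set p; q]]; split.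
  move=> m; rewrite inE => /eqP ->; exists p, q; split => //; rewrite ?inE ?eqxx ?orbT //.
    by apply/negP => /eqP e; apply: (AB hp); rewrite e.
  by rewrite hatE_att hp hq !orbT.
move=> x hx; suff -> : [set m in [set [set p; q]] | x \in m] = [set [set p; q]] by rewrite cards1.
by apply/setP => m; rewrite !inE; case: eqP => // ->.
Qed.

Lemma pm_cross n : forall P Q : {set V}, #|Q| = n -> n <= #|P| -> P \subset A -> Q \subset B ->
  exists Z : {set V}, [/\ Z \subset P, #|Z| = n & has_pm v (Z :|: Q)].
Proof.
elim: n => [|n IH] P Q hQ hP hPA hQB.
  exists set0; split; rewrite ?sub0set ?cards0 // (cards0_eq hQ) setU0.
  by exists set0; split => [m|x]; rewrite inE.
have /set0Pn [q hq] : Q != set0 by apply/negP => /eqP e; rewrite e cards0 in hQ.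
have /set0Pn [p hp] : P != set0 by apply/negP => /eqP e; rewrite e cards0 in hP.
have hQ' : #|Q :\ q| = n by move: hQ; rewrite (cardsD1 q Q) hq; case.
have hP' : n <= #|P :\ p| by move: hP; rewrite (cardsD1 p P) hp.
have [Z' [hZ'P hZ' hpm]] := IH _ _ hQ' hP' (subset_trans (subsetDl _ _) hPA) (subset_trans (subsetDl _ _) hQB).
have hpZ' : p \notin Z' by apply/negP => /(subsetP hZ'P); rewrite !inE eqxx.
have hpA : p \in A := subsetP hPA p hp.
have hqB : q \in B := subsetP hQB q hq.
exists (p |: Z'); split.
- by rewrite subUset sub1set hp (subset_trans hZ'P (subsetDl _ _)).
- by rewrite cardsU1 hpZ' hZ'.
have -> : (p |: Z') :|: Q = (Z' :|: Q :\ q) :|: [set p; q].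
  apply/setP => x; rewrite !inE.
  have [->|xq] := eqVneq x q; first by rewrite hq !orbT.
  by rewrite /= orbF; case: (x == p); rewrite ?orbT ?orbF.
apply: pm_union => //; first exact: pm_pair.
move=> x; rewrite !inE => /orP[hx|/andP[hxq hxQ]] /orP[/eqP e|/eqP e]; subst x.
- by rewrite hx in hpZ'.
- by move: (subsetP hZ'P q hx); rewrite inE => /andP[_ /(subsetP hPA) h]; apply: (AB h hqB).
- by apply: (AB hpA); apply: (subsetP hQB).
- by rewrite eqxx in hxq.
Qed.

Ltac bsolve := intros; repeat match goal with H : is_true true -> _ |- _ => specialize (H isT) end;
  first [done | by rewrite ?andbF ?andbT ?orbF ?orbT | match goal with H : is_true false |- _ => discriminate H | H : False |- _ => destruct H end].

Lemma construct bl ar Sl Sr : kfeasible vl bl Sl -> kfeasible vr ar Sr -> ar <= bl -> 0 < bl ->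
  kfeasible v (bl - ar) (Sl :|: Sr).
Proof.
move=> [hSl hdl [Xl [hXl hXlc hpml]]] [hSr hdr [Xr [hXr hXrc hpmr]]] hab hb.
have hXlA : Xl \subset A := subset_trans hXl (subsetIr _ _).
have hXlS : Xl \subset Sl := subset_trans hXl (subsetIl _ _).
have hXrB : Xr \subset B := subset_trans hXr (subsetIr _ _).
have hXrS : Xr \subset Sr := subset_trans hXr (subsetIl _ _).
have [Z [hZ hZc hpmZ]] := pm_cross hXrc (eq_ind_r (fun k => ar <= k) hab hXlc) hXlA hXrB.
split.
- rewrite hatV_node; exact: setUSS.
- rewrite hatTS_att; apply/subsetP => x; rewrite cnbhd_in hatV_node !inE => /andP[hxA hxV].
  case/orP: hxV => hxV.
    have := subsetP hdl x; rewrite !inE hxA hxV => /(_ isT) /orP[->//|/andP[_ /existsP[s /andP[hs he]]]].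
    apply/orP; right; rewrite ?hxV /=; apply/existsP; exists s.
    by rewrite inE hs /= he.
  case hxB: (x \in B).
    have /set0Pn [s hs] : Xl != set0.
      by apply/negP => /eqP e; move: hXlc; rewrite e cards0 => e'; rewrite -e' in hb.
    apply/orP; right; rewrite ?hxV ?orbT /=; apply/existsP; exists s.
    by rewrite inE (subsetP hXlS s hs) /= ?hatE_att (subsetP hXlA s hs) hxB /= !orbT.
  have := subsetP hdr x; rewrite !inE hxB hxV => /(_ isT) /orP[->|/andP[_ /existsP[s /andP[hs he]]]].
    by rewrite orbT.
  apply/orP; right; rewrite ?hxV ?orbT /=; apply/existsP; exists s.
  by rewrite inE hs orbT /= ?hatE_att he orbT.
- exists (Xl :\: Z); split.
  + rewrite hatTS_att; apply/subsetP => x; rewrite !inE => /andP[_ hx].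
    by rewrite (subsetP hXlS x hx) (subsetP hXlA x hx).
  + by rewrite cardsD (setIidPr hZ) hZc hXlc.
  + have -> : (Sl :|: Sr) :\: (Xl :\: Z) = ((Sl :\: Xl) :|: (Sr :\: Xr)) :|: (Z :|: Xr).
      apply/setP => x; rewrite !inE.
      have h1 := subsetP hZ x; have h2 := subsetP hXlS x; have h3 := subsetP hSl x.
      have h4 := subsetP hXrS x; have h5 := subsetP hSr x; have h6 := @Hdis x.
      move: h1 h2 h3 h4 h5 h6.
      case: (x \in Z); case: (x \in Xl); case: (x \in Sl); case: (x \in Xr); case: (x \in Sr);
      case: (x \in Vl); case: (x \in Vr); bsolve.
    have liftl : forall x y, hatE vl x y -> hatE v x y by move=> x y h; rewrite hatE_att h.
    have liftr : forall x y, hatE vr x y -> hatE v x y by move=> x y h; rewrite hatE_att h orbT.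
    apply: pm_union => //; first apply: pm_union.
    * exact: pm_lift liftl hpml.
    * exact: pm_lift liftr hpmr.
    * move=> x; rewrite !inE => /andP[_ /(subsetP hSl) h1] /andP[_ /(subsetP hSr) h2].
      exact: Hdis h1 h2.
    * move=> x; rewrite !inE.
      have h1 := subsetP hZ x; have h2 := subsetP hXlS x; have h3 := subsetP hSl x.
      have h4 := subsetP hXrS x; have h5 := subsetP hSr x; have h6 := @Hdis x.
      move: h1 h2 h3 h4 h5 h6.
      case: (x \in Z); case: (x \in Xl); case: (x \in Sl); case: (x \in Xr); case: (x \in Sr);
      case: (x \in Vl); case: (x \in Vr); bsolve.
Qed.

Lemma split_feas k S : kfeasible v k S -> exists Sl Sr j j',
  [/\ kfeasible vl (k + j) Sl, kfeasible vr j' Sr, j' <= j & #|S| = #|Sl| + #|Sr|].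
Proof.
move=> [hS hd [X [hX hXc [M [hM1 hM2]]]]].
rewrite hatTS_att in hX hd; rewrite hatV_node in hS hd.
set W := S :\: X in hM1 hM2.
have hXA : X \subset A := subset_trans hX (subsetIr _ _).
have hXS : X \subset S := subset_trans hX (subsetIl _ _).
have hWU : W \subset Vl :|: Vr := subset_trans (subsetDl _ _) hS.
have hWU' : W \subset Vr :|: Vl by rewrite setUC.
have Hdis' : forall x, x \in Vr -> x \in Vl -> False by move=> x a b; exact: Hdis b a.
set Yl := Ypart W M Vl Vr; set Yr := Ypart W M Vr Vl.
have hYlW := Y_sub W M Vl Vr; have hYrW := Y_sub W M Vr Vl.
have hYlA : Yl \subset A := Y_TU hM1 hWU cross_l.
have hYrB : Yr \subset B := Y_TU hM1 hWU' cross_r.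
have hpml := Y_pm hM1 hM2 Hdis edge_l.
have hpmr := Y_pm hM1 hM2 Hdis' edge_r.
exists (S :&: Vl), (S :&: Vr), #|Yl|, #|Yr|; split.
- split; first exact: subsetIr.
  + apply/subsetP => x; rewrite cnbhd_in !inE => /andP[hxA hxV].
    have := subsetP hd x; rewrite cnbhd_in !inE hxA hxV /= => /(_ isT) /orP[->//|/existsP[s /andP[hs he]]].
    move: he => /or4P[he|/inEr[_ h]|/andP[_ /inB h]|/andP[_ h]].
    * apply/orP; right; rewrite ?hxV /=; apply/existsP; exists s; rewrite !inE hs he.
      by case/inEl: he => ->.
    * by exfalso; apply: (Hdis hxV h).
    * by exfalso; apply: (Hdis hxV h).
    * by rewrite h in hxA.
  + exists (X :|: Yl); split.
    * rewrite subUset; apply/andP; split; apply/subsetP => x hx; rewrite !inE.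
        by move: (subsetP hX x hx); rewrite !inE => /andP[-> ->]; rewrite inA // (subsetP hXA x hx).
      move: (subsetP hYlW x hx); rewrite !inE => /andP[/andP[_ ->] ->].
      by rewrite (subsetP hYlA x hx).
    * rewrite cardsU hXc.
      suff -> : X :&: Yl = set0 by rewrite cards0 subn0.
      apply/setP => x; rewrite !inE; apply/negP => /andP[hx hy].
      by move: hy; rewrite hx.
    * suff -> : (S :&: Vl) :\: (X :|: Yl) = (W :&: Vl) :\: Yl by [].
      apply/setP => x; rewrite !inE; by case: (x \in X); case: (x \in Yl); case: (x \in S); case: (x \in Vl).
- split; first exact: subsetIr.
  + apply/subsetP => x; rewrite cnbhd_in !inE => /andP[hxB hxV].
    have hxA : x \notin A by apply/negP => /inA h; apply: (Hdis h hxV).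
    have := subsetP hd x; rewrite cnbhd_in !inE hxA hxV orbT /= => /(_ isT) /orP[->//|/existsP[s /andP[hs he]]].
    move: he => /or4P[/inEl[_ h]|he|/andP[_ h]|/andP[_ /inA h]].
    * by exfalso; apply: (Hdis h hxV).
    * apply/orP; right; rewrite ?hxV /=; apply/existsP; exists s; rewrite !inE hs he.
      by case/inEr: he => ->.
    * by rewrite h in hxB.
    * by exfalso; apply: (Hdis h hxV).
  + exists Yr; split => //.
    rewrite subsetI hYrB andbT; apply/subsetP => x hx.
      by move: (subsetP hYrW x hx); rewrite !inE => /andP[/andP[_ ->] ->].
    * suff -> : (S :&: Vr) :\: Yr = (W :&: Vr) :\: Yr by [].
      apply/setP => x; rewrite /W !in_setD !in_setI !in_setD.
      have h1 := subsetP hXA x; have h2 := @Hdis x; have h3 := @inA x; move: h1 h2 h3.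
      case: (x \in X); case: (x \in Yr); case: (x \in S); case: (x \in Vr); case: (x \in A);
      case: (x \in Vl); bsolve.
- have := Y_card hM1 hM2 Hdis' hWU'. by [].
- suff -> : S :&: Vr = S :\: Vl by rewrite cardsID.
  apply/setP => x; rewrite !inE.
  have h1 := subsetP hS x; have h2 := @Hdis x; move: h1 h2; rewrite !inE.
  case: (x \in S); case: (x \in Vr); case: (x \in Vl); bsolve.
Qed.
End Att.

Theorem lemma32 (V : finType) (e : rel V) (T vl vr : dtree V) (al bl ar br : nat) :
  symmetric e -> irreflexive e -> dist_hereditary e ->
  decomp_tree e T -> is_subtree (Node OAttach vl vr) T ->
  propP vl -> propP vr ->
  alpha_is vl al -> beta_is vl bl -> alpha_is vr ar -> beta_is vr br ->
  ar <= bl -> ~ (al = 0 /\ br = 0) -> ~ (ar = 0 /\ bl = 0) ->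
  beta_is (Node OAttach vl vr) (bl - ar).
Proof.
move=> _ _ _ [hu _ _] hsub _ _ _ [hbl [[ml [hminl hgl]] hblmax]] [har [[mr [hminr hgr]] harmin]] _ hab _ hnz.
have Hdis : forall x, x \in hatV vl -> x \in hatV vr -> False.
  have := subtree_uniq hsub hu; rewrite /= cat_uniq => /and3P[_ hh _] x.
  rewrite !hatV_leaves !inE => h1 h2; move/negP: hh; apply; apply/hasP; by exists x.
have [[Sl [hFl hSl]] _] := hgl.
have [[Sr [hFr hSr]] _] := hgr.
have hb : 0 < bl.
  rewrite lt0n; apply/negP => /eqP hb0; apply: hnz; split => //.
  by move: hab; rewrite hb0 leqn0 => /eqP.
have hFv := construct Hdis hFl hFr hab hb.
have hcard : #|Sl :|: Sr| = ml + mr.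
  rewrite cardsU hSl hSr; suff -> : Sl :&: Sr = set0 by rewrite cards0 subn0.
  case: hFl => hl _ _; case: hFr => hr _ _.
  apply/setP => x; rewrite !inE; apply/negP => /andP[/(subsetP hl) h1 /(subsetP hr) h2].
  exact: Hdis h1 h2.
have lower : forall k S, kfeasible (Node OAttach vl vr) k S -> ml + mr <= #|S|.
  move=> k S hF; have [Sl' [Sr' [j [j' [hF1 hF2 _ ->]]]]] := split_feas Hdis hF.
  by rewrite leq_add // ?(min_le hminl hF1) ?(min_le hminr hF2).
have hgv : gamma_is (Node OAttach vl vr) (bl - ar) (ml + mr).
  by split; [exists (Sl :|: Sr) | exact: lower].
have hminv : min_is (Node OAttach vl vr) (ml + mr).
  split; first by exists (bl - ar); split => //; rewrite /= (leq_trans (leq_subr _ _) hbl).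
  move=> k m' _ [[S0 [hF0 <-]] _]; exact: lower hF0.
split; first by rewrite /= (leq_trans (leq_subr _ _) hbl).
split; first by exists (ml + mr).
move=> k m hk hm [[S0 [hF0 hS0]] _].
rewrite (min_uniq hm hminv) in hS0.
have [Sl' [Sr' [j [j' [hF1 hF2 hjj hsum]]]]] := split_feas Hdis hF0.
have h1 := min_le hminl hF1; have h2 := min_le hminr hF2.
have e1 : #|Sl'| = ml by lia.
have e2 : #|Sr'| = mr by lia.
have := hblmax _ _ (feas_k hF1) hminl (gamma_of_min hminl hF1 e1).
have := harmin _ _ (feas_k hF2) hminr (gamma_of_min hminr hF2 e2).
lia.
Qed.
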